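(* Let $\mathcal M=(M,\le,{}^\perp)$ be a complete orthomodular lattice, $L$ an involutive submonoid of $\mathbf{Lin}(\mathcal M)$ containing all Sasaki projections, and $\mathscr P(L)$ the corresponding involutive generalized dynamic algebra. Then $\widetilde{\mathscr P(L)}=(\{{\sim}W\mid W\in\mathscr P(L)\},\preceq,{\sim})$ is a complete orthomodular lattice closed under ${\sim}$, and the map $\delta\colon M\to\widetilde{\mathscr P(L)}$, $\delta(m)=\{\pi_m\}$, is an order-isomorphism with $\delta(m^\perp)={\sim}\delta(m)$ for all $m\in M$.
   Context: For an orthomodular lattice and $m\in M$, $\pi_m(x)=m\wedge(m^\perp\vee x)$ (Sasaki projection). A map $f\colon M\to M$ is linear if there is $g\colon M\to M$ (unique, written $f^*$) with $f(x)\le y^\perp\iff x\le g(y)^\perp$ for all $x,y$. $\mathbf{Lin}(\mathcal M)$ is the set of linear maps, an involutive monoid under composition, $f\mapsto f^*$, $\mathrm{id}_M$; each $\pi_m\in\mathbf{Lin}(\mathcal M)$. $\mathscr P(L)$ is the powerset of $L$ with union as join, $A\odot B=\{a\circ b\mid a\in A,b\in B\}$, $A^*=\{a^*\mid a\in A\}$, unit $\{\mathrm{id}_M\}$, ${\sim}A=\{\pi_{(\bigvee_{a\in A}a(1))^\perp}\}$. For a subset family $\mathcal W$ of the test set $\widetilde{\mathscr P(L)}=\{{\sim}W\}$, its join is $\bigvee\mathcal W={\sim}{\sim}(\bigcup\mathcal W)$, and $X\preceq Y$ iff $\bigvee\{X,Y\}=Y$. *)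

(* Defs.v *)
Set Implicit Arguments.

Section COML.
Variable A : Type.

Definition join2 (sup : (A -> Prop) -> A) (x y : A) : A :=
  sup (fun z => z = x \/ z = y).
Definition meet2 (perp : A -> A) (sup : (A -> Prop) -> A) (x y : A) : A :=
  perp (join2 sup (perp x) (perp y)).

Definition is_COML (C : A -> Prop) (le : A -> A -> Prop) (perp : A -> A)
    (sup : (A -> Prop) -> A) : Prop :=
  (forall x, C x -> C (perp x)) /\
  (forall S : A -> Prop, (forall x, S x -> C x) -> C (sup S)) /\
  (forall x, C x -> le x x) /\
  (forall x y, C x -> C y -> le x y -> le y x -> x = y) /\
  (forall x y z, C x -> C y -> C z -> le x y -> le y z -> le x z) /\
  (forall S : A -> Prop, (forall x, S x -> C x) ->
     (forall x, S x -> le x (sup S)) /\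
     (forall u, C u -> (forall x, S x -> le x u) -> le (sup S) u)) /\
  (forall x, C x -> perp (perp x) = x) /\
  (forall x y, C x -> C y -> le x y -> le (perp y) (perp x)) /\
  (forall x, C x -> join2 sup x (perp x) = sup C) /\
  (forall x y, C x -> C y -> le x y ->
     y = join2 sup x (meet2 perp sup y (perp x))).
End COML.

Section Dyn.
Variables (M : Type) (le : M -> M -> Prop) (perp : M -> M) (sup : (M -> Prop) -> M).

Definition top : M := sup (fun _ => True).

Definition sasaki (m : M) : M -> M :=
  fun x => meet2 perp sup m (join2 sup (perp m) x).

Definition is_adjoint (f g : M -> M) : Prop :=
  forall x y, le (f x) (perp y) <-> le x (perp (g y)).

Definition linear (f : M -> M) : Prop := exists g, is_adjoint f g.

Definition involutive_submonoid (L : (M -> M) -> Prop) : Prop :=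
  (forall f, L f -> linear f) /\
  L (fun x => x) /\
  (forall f g, L f -> L g -> L (fun x => f (g x))) /\
  (forall f g, L f -> is_adjoint f g -> L g).

Definition inPL (L : (M -> M) -> Prop) (W : (M -> M) -> Prop) : Prop :=
  forall f, W f -> L f.

Definition negP (W : (M -> M) -> Prop) : (M -> M) -> Prop :=
  fun f => f = sasaki (perp (sup (fun z => exists a, W a /\ z = a top))).

Definition testset (L : (M -> M) -> Prop) (X : (M -> M) -> Prop) : Prop :=
  exists W, inPL L W /\ X = negP W.

Definition tjoin (F : ((M -> M) -> Prop) -> Prop) : (M -> M) -> Prop :=
  negP (negP (fun f => exists W, F W /\ W f)).

Definition tle (X Y : (M -> M) -> Prop) : Prop :=
  tjoin (fun Z => Z = X \/ Z = Y) = Y.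

Definition delta (m : M) : (M -> M) -> Prop := fun f => f = sasaki m.
End Dyn.

(* Main.v *)
Require Import Defs.
From Stdlib Require Import FunctionalExtensionality PropExtensionality.

Lemma pred_ext {T} (P Q : T -> Prop) : (forall x, P x <-> Q x) -> P = Q.
Proof. intro H; apply functional_extensionality; intro x; apply propositional_extensionality; apply H. Qed.

Ltac dest H := destruct H as (Hcp & Hcs & Hrefl & Hanti & Htrans & Hlub & Hpp & Hanti' & Hcompl & Hom).

Lemma join2_r {M le perp sup} (H: is_COML (fun _:M => True) le perp sup) x y :
  le x y -> join2 sup x y = y.
Proof. dest H. intro Hxy. destruct (Hlub (fun z => z = x \/ z = y) (fun _ _ => I)) as [Hu Hl].
 apply Hanti; auto. apply Hl; auto. intros z [-> | ->]; auto. Qed.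

Lemma join2_l {M le perp sup} (H: is_COML (fun _:M => True) le perp sup) x y :
  le y x -> join2 sup x y = x.
Proof. dest H. intro Hxy. destruct (Hlub (fun z => z = x \/ z = y) (fun _ _ => I)) as [Hu Hl].
 apply Hanti; auto. apply Hl; auto. intros z [-> | ->]; auto. Qed.

Lemma sup_single {M le perp sup} (H: is_COML (fun _:M => True) le perp sup) x :
  sup (fun z => z = x) = x.
Proof. dest H. destruct (Hlub (fun z => z = x) (fun _ _ => I)) as [Hu Hl].
 apply Hanti; auto. apply Hl; auto. intros z ->; auto. Qed.

Lemma le_top {M le perp sup} (H: is_COML (fun _:M => True) le perp sup) x :
  le x (top sup).
Proof. dest H. destruct (Hlub (fun _ => True) (fun _ _ => I)) as [Hu Hl]. apply Hu; auto. Qed.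

Lemma sasaki_top {M le perp sup} (H: is_COML (fun _:M => True) le perp sup) m :
  sasaki perp sup m (top sup) = m.
Proof.
  unfold sasaki, meet2. rewrite (join2_r H (perp m) (top sup)) by apply (le_top H).
  pose proof H as H'. dest H'.
  rewrite (join2_l H (perp m) (perp (top sup))). apply Hpp; auto.
  apply Hanti'; auto; apply (le_top H).
Qed.

Lemma delta_inj {M le perp sup} (H: is_COML (fun _:M => True) le perp sup) m n :
  delta perp sup m = delta perp sup n -> m = n.
Proof.
  intro E. assert (E2 : delta perp sup n (sasaki perp sup m)) by (rewrite <- E; reflexivity).
  unfold delta in E2. rewrite <- (sasaki_top H m), E2. apply (sasaki_top H).
Qed.

Lemma negP_delta {M le perp sup} (H: is_COML (fun _:M => True) le perp sup) k :
  negP perp sup (delta perp sup k) = delta perp sup (perp k).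
Proof.
  assert (E : (fun z => exists a, delta perp sup k a /\ z = a (top sup)) = (fun z => z = k)).
  { apply pred_ext; intro z; split.
    - intros [a [Ha ->]]. unfold delta in Ha. subst a. apply (sasaki_top H).
    - intros ->. exists (sasaki perp sup k). split. reflexivity. symmetry; apply (sasaki_top H). }
  unfold negP. rewrite E. rewrite (sup_single H). reflexivity.
Qed.

Lemma tjoin_delta {M le perp sup} (H: is_COML (fun _:M => True) le perp sup) F :
  (forall X, F X -> exists k, X = delta perp sup k) ->
  tjoin perp sup F = delta perp sup (sup (fun m => F (delta perp sup m))).
Proof.
  intro HF. unfold tjoin.
  set (U := fun f => exists W, F W /\ W f).
  change (negP perp sup U) with
    (delta perp sup (perp (sup (fun z => exists a, U a /\ z = a (top sup))))).
  rewrite (negP_delta H). pose proof H as H'. dest H'. rewrite Hpp by auto.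
  f_equal. f_equal. apply pred_ext; intro z; split.
  - intros [a [[W [HW Wa]] ->]]. destruct (HF W HW) as [k ->].
    unfold delta in Wa. subst a. rewrite (sasaki_top H). exact HW.
  - intro Hz. exists (sasaki perp sup z). split.
    + exists (delta perp sup z). split. exact Hz. reflexivity.
    + symmetry; apply (sasaki_top H).
Qed.

Lemma transfer {M le perp sup B} (C: B -> Prop) le' perp' sup' (d: M -> B) :
 is_COML (fun _ => True) le perp sup ->
 (forall m, C (d m)) -> (forall x, C x -> exists m, d m = x) ->
 (forall m n, d m = d n -> m = n) ->
 (forall m n, le' (d m) (d n) <-> le m n) ->
 (forall m, perp' (d m) = d (perp m)) ->
 (forall S, (forall x, S x -> C x) -> sup' S = d (sup (fun m => S (d m)))) ->
 is_COML C le' perp' sup'.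
Proof.
  intros H HC Hsurj Hinj Hle Hperp Hsup. pose proof H as H'. dest H'.
  assert (J : forall a b, join2 sup' (d a) (d b) = d (join2 sup a b)).
  { intros a b. unfold join2. rewrite Hsup.
    - f_equal. f_equal. apply pred_ext; intro z; split.
      + intros [E|E]; [left|right]; apply Hinj; exact E.
      + intros [E|E]; [left|right]; subst; reflexivity.
    - intros x [-> | ->]; apply HC. }
  split; [|split; [|split; [|split; [|split; [|split; [|split; [|split; [|split]]]]]]]].
  - intros x Hx. destruct (Hsurj x Hx) as [m <-]. rewrite Hperp. apply HC.
  - intros S HS. rewrite Hsup by exact HS. apply HC.
  - intros x Hx. destruct (Hsurj x Hx) as [m <-]. apply Hle. auto.
  - intros x y Hx Hy. destruct (Hsurj x Hx) as [m <-]. destruct (Hsurj y Hy) as [n <-].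
    intros A1 A2. apply Hle in A1. apply Hle in A2. f_equal. apply Hanti; auto.
  - intros x y z Hx Hy Hz. destruct (Hsurj x Hx) as [m <-]. destruct (Hsurj y Hy) as [n <-].
    destruct (Hsurj z Hz) as [k <-]. intros A1 A2. apply Hle in A1. apply Hle in A2.
    apply Hle. eapply Htrans; eauto.
  - intros S HS. rewrite Hsup by exact HS.
    destruct (Hlub (fun m => S (d m)) (fun _ _ => I)) as [Hu Hl]. split.
    + intros x Sx. destruct (Hsurj x (HS x Sx)) as [m <-]. apply Hle. apply Hu. exact Sx.
    + intros u Hu'. destruct (Hsurj u Hu') as [k <-]. intro Hall. apply Hle.
      apply Hl; auto. intros m Sm. apply Hle. apply Hall. exact Sm.
  - intros x Hx. destruct (Hsurj x Hx) as [m <-]. rewrite !Hperp. f_equal. apply Hpp; auto.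
  - intros x y Hx Hy. destruct (Hsurj x Hx) as [m <-]. destruct (Hsurj y Hy) as [n <-].
    intro A. apply Hle in A. rewrite !Hperp. apply Hle. apply Hanti'; auto.
  - intros x Hx. destruct (Hsurj x Hx) as [m <-]. rewrite Hperp, J, Hcompl by auto.
    rewrite (Hsup C) by auto. f_equal. f_equal. apply pred_ext; intro z; split; auto.
  - intros x y Hx Hy. destruct (Hsurj x Hx) as [m <-]. destruct (Hsurj y Hy) as [n <-].
    intro A. apply Hle in A. unfold meet2. rewrite !Hperp, J, Hperp, J.
    exact (f_equal d (Hom m n I I A)).
Qed.

Theorem proposition3p10 (M : Type) (le : M -> M -> Prop) (perp : M -> M)
    (sup : (M -> Prop) -> M) (L : (M -> M) -> Prop) :
  is_COML (fun _ : M => True) le perp sup ->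
  involutive_submonoid le perp L ->
  (forall m : M, L (sasaki perp sup m)) ->
  (* the test set is a complete orthomodular lattice, closed under ~ *)
  is_COML (testset perp sup L) (tle perp sup) (negP perp sup) (tjoin perp sup) /\
  (* delta is an order-isomorphism M -> test set, with delta(m^perp) = ~delta(m) *)
  (forall m : M, testset perp sup L (delta perp sup m)) /\
  (forall m n : M, delta perp sup m = delta perp sup n -> m = n) /\
  (forall X, testset perp sup L X -> exists m : M, delta perp sup m = X) /\
  (forall m n : M, le m n <-> tle perp sup (delta perp sup m) (delta perp sup n)) /\
  (forall m : M, delta perp sup (perp m) = negP perp sup (delta perp sup m)).
Proof.
  intros H HL Hs. pose proof H as H'. dest H'.
  assert (Tin : forall m, testset perp sup L (delta perp sup m)).
  { intro m. exists (delta perp sup (perp m)). split.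
    - intros f Hf. unfold delta in Hf. subst f. apply Hs.
    - rewrite (negP_delta H), Hpp by auto. reflexivity. }
  assert (Tsurj : forall X, testset perp sup L X -> exists m, delta perp sup m = X).
  { intros X [W [_ ->]]. eexists. reflexivity. }
  assert (Tle : forall m n, le m n <-> tle perp sup (delta perp sup m) (delta perp sup n)).
  { intros m n. unfold tle. rewrite (tjoin_delta H).
    2:{ intros X [-> | ->]; eexists; reflexivity. }
    assert (E : (fun k => delta perp sup k = delta perp sup m \/ delta perp sup k = delta perp sup n)
                = (fun z => z = m \/ z = n)).
    { apply pred_ext; intro z; split.
      - intros [E|E]; [left|right]; exact (delta_inj H _ _ E).
      - intros [E|E]; [left|right]; subst; reflexivity. }
    rewrite E. change (sup (fun z => z = m \/ z = n)) with (join2 sup m n). split.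
    - intro A. rewrite (join2_r H _ _ A). reflexivity.
    - intro A. apply (delta_inj H) in A. rewrite <- A.
      destruct (Hlub (fun z => z = m \/ z = n) (fun _ _ => I)) as [Hu _]. apply Hu. auto. }
  split; [|split; [exact Tin|split; [intros m n; apply (delta_inj H)|split; [exact Tsurj|split; [exact Tle|]]]]].
  - apply (@transfer _ _ _ _ _ _ _ _ _ (delta perp sup) H).
    + exact Tin.
    + exact Tsurj.
    + intros m n; apply (delta_inj H).
    + intros m n. rewrite Tle. tauto.
    + intro m. apply (negP_delta H).
    + intros S HS. apply (tjoin_delta H). intros X HX. destruct (Tsurj X (HS X HX)) as [k <-].
      eauto.
  - intro m. symmetry. apply (negP_delta H).
Qed.
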